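(* Let $\mathfrak L$ be a complete lattice and $\lambda\in\mathcal O$ a nonzero limit ordinal. (1) If $h:\mathcal O\times\mathcal O\to\mathfrak L$ is antitone in its first argument (i.e. $\alpha\le\alpha'$ implies $h(\alpha',\beta)\sqsubseteq h(\alpha,\beta)$ for all $\beta$), then $\limsup_{\beta\to\lambda}h(\beta,\beta)\sqsubseteq\limsup_{\alpha\to\lambda}\limsup_{\beta\to\lambda}h(\alpha,\beta)$. (2) If $h:\mathcal O\times\mathcal O\to\mathfrak L$ is monotone in its first argument, then $\liminf_{\alpha\to\lambda}\liminf_{\beta\to\lambda}h(\alpha,\beta)\sqsubseteq\liminf_{\beta\to\lambda}h(\beta,\beta)$.
   Context: $\mathcal O$ is the set of ordinals $\le\top_{\mathsf{ord}}$ for a fixed ordinal $\top_{\mathsf{ord}}$ ($=\beth_\omega$). For $f:\mathcal O\to\mathfrak L$ and a nonzero limit $\lambda$: $\liminf_{\alpha\to\lambda}f(\alpha)=\sup_{\alpha_0<\lambda}\inf_{\alpha_0\le\alpha<\lambda}f(\alpha)$, $\limsup_{\alpha\to\lambda}f(\alpha)=\inf_{\alpha_0<\lambda}\sup_{\alpha_0\le\alpha<\lambda}f(\alpha)$. *)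

(* Defs.v *)
From Stdlib Require Import Relations Wellfounded.

Record CompleteLattice := {
  cl_car :> Type;
  cl_le : cl_car -> cl_car -> Prop;
  cl_sup : (cl_car -> Prop) -> cl_car;
  cl_inf : (cl_car -> Prop) -> cl_car;
  cl_refl : forall x, cl_le x x;
  cl_trans : forall x y z, cl_le x y -> cl_le y z -> cl_le x z;
  cl_antisym : forall x y, cl_le x y -> cl_le y x -> x = y;
  cl_sup_ub : forall (A : cl_car -> Prop) x, A x -> cl_le x (cl_sup A);
  cl_sup_least : forall (A : cl_car -> Prop) u,
      (forall x, A x -> cl_le x u) -> cl_le (cl_sup A) u;
  cl_inf_lb : forall (A : cl_car -> Prop) x, A x -> cl_le (cl_inf A) x;
  cl_inf_greatest : forall (A : cl_car -> Prop) u,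
      (forall x, A x -> cl_le u x) -> cl_le u (cl_inf A)
}.

(** The ordinal segment O = {alpha | alpha <= top}: modelled as a
    well-ordered set (strict total, well-founded order) with a greatest
    element. *)
Record OrdinalSegment := {
  os_car :> Type;
  os_lt : os_car -> os_car -> Prop;
  os_top : os_car;
  os_irrefl : forall a, ~ os_lt a a;
  os_trans : forall a b c, os_lt a b -> os_lt b c -> os_lt a c;
  os_total : forall a b, os_lt a b \/ a = b \/ os_lt b a;
  os_wf : well_founded os_lt;
  os_top_max : forall a, a = os_top \/ os_lt a os_top
}.

Definition os_le (O : OrdinalSegment) (a b : O) : Prop := os_lt O a b \/ a = b.

(** Nonzero limit ordinal: something lies below it, and it is not a successor,
    i.e. below it there is no largest element. *)
Definition nonzero_limit (O : OrdinalSegment) (lam : O) : Prop :=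
  (exists a, os_lt O a lam) /\
  (forall a, os_lt O a lam -> exists b, os_lt O a b /\ os_lt O b lam).

Definition tail_inf (O : OrdinalSegment) (L : CompleteLattice) (f : O -> L)
  (lam a0 : O) : L :=
  cl_inf L (fun y => exists a, os_le O a0 a /\ os_lt O a lam /\ y = f a).

Definition tail_sup (O : OrdinalSegment) (L : CompleteLattice) (f : O -> L)
  (lam a0 : O) : L :=
  cl_sup L (fun y => exists a, os_le O a0 a /\ os_lt O a lam /\ y = f a).

Definition liminf (O : OrdinalSegment) (L : CompleteLattice) (f : O -> L)
  (lam : O) : L :=
  cl_sup L (fun y => exists a0, os_lt O a0 lam /\ y = tail_inf O L f lam a0).

Definition limsup (O : OrdinalSegment) (L : CompleteLattice) (f : O -> L)
  (lam : O) : L :=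
  cl_inf L (fun y => exists a0, os_lt O a0 lam /\ y = tail_sup O L f lam a0).

(* Main.v *)
Require Import Defs.

Lemma os_le_trans (O : OrdinalSegment) a b c : os_le O a b -> os_le O b c -> os_le O a c.
Proof.
  unfold os_le; intros [H|H] [H'|H']; subst; auto.
  left; eapply os_trans; eauto.
Qed.

Lemma os_max (O : OrdinalSegment) (lam a b : O) : os_lt O a lam -> os_lt O b lam ->
  exists c, os_le O a c /\ os_le O b c /\ os_lt O c lam.
Proof.
  intros Ha Hb. destruct (os_total O a b) as [H|[H|H]].
  - exists b; unfold os_le; auto.
  - subst; exists b; unfold os_le; auto.
  - exists a; unfold os_le; auto.
Qed.

Theorem lemma4p12 (O : OrdinalSegment) (L : CompleteLattice) (lam : O)
  (Hlam : nonzero_limit O lam) :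
  (forall h : O -> O -> L,
     (forall a a' b, os_le O a a' -> cl_le L (h a' b) (h a b)) ->
     cl_le L (limsup O L (fun b => h b b) lam)
             (limsup O L (fun a => limsup O L (fun b => h a b) lam) lam))
  /\
  (forall h : O -> O -> L,
     (forall a a' b, os_le O a a' -> cl_le L (h a b) (h a' b)) ->
     cl_le L (liminf O L (fun a => liminf O L (fun b => h a b) lam) lam)
             (liminf O L (fun b => h b b) lam)).
Proof.
  split; intros h Hh.
  - unfold limsup at 2. apply cl_inf_greatest. intros y [a0 [Ha0 ->]].
    eapply cl_trans; [| apply cl_sup_ub; exists a0; split; [right; reflexivity| split; [exact Ha0|reflexivity]]].
    apply cl_inf_greatest. intros z [b0 [Hb0 ->]].
    destruct (os_max O lam a0 b0 Ha0 Hb0) as [c [Hac [Hbc Hc]]].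
    eapply cl_trans; [apply cl_inf_lb; exists c; split; [exact Hc|reflexivity]|].
    apply cl_sup_least. intros x [b [Hcb [Hb ->]]].
    eapply cl_trans; [apply Hh with (a := a0); eapply os_le_trans; eauto|].
    apply cl_sup_ub. exists b. split; [eapply os_le_trans; eauto| auto].
  - unfold liminf at 1. apply cl_sup_least. intros y [a0 [Ha0 ->]].
    eapply cl_trans; [apply cl_inf_lb; exists a0; split; [right; reflexivity| split; [exact Ha0|reflexivity]]|].
    apply cl_sup_least. intros z [b0 [Hb0 ->]].
    destruct (os_max O lam a0 b0 Ha0 Hb0) as [c [Hac [Hbc Hc]]].
    eapply cl_trans; [|apply cl_sup_ub; exists c; split; [exact Hc|reflexivity]].
    apply cl_inf_greatest. intros x [b [Hcb [Hb ->]]].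
    eapply cl_trans; [|apply Hh with (a := a0); eapply os_le_trans; eauto].
    apply cl_inf_lb. exists b. split; [eapply os_le_trans; eauto| auto].
Qed.
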